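(* Let $q$ be a polynomial of degree $n$. Then $\mathcal D_\zeta(q)\le n^2\|q\|_{H^2}^2$ for every $\zeta\in\overline{\mathbb D}$.
   Context: $\mathbb D$ is the open unit disk, $H^2$ the Hardy space with $\|\sum c_kz^k\|_{H^2}^2=\sum|c_k|^2$. For $\zeta\in\overline{\mathbb D}$, $\mathcal D_\zeta$ is the set of holomorphic $f$ on $\mathbb D$ of the form $f(z)=a+(z-\zeta)g(z)$ with $g\in H^2$, $a\in\mathbb C$; for such $f$ set $\mathcal D_\zeta(f):=\|g\|_{H^2}^2$. *)

(* Defs.v *)
From Stdlib Require Import Reals.
From Coquelicot Require Import Coquelicot.
Open Scope C_scope.

Fixpoint peval (p : nat -> C) (n : nat) (z : C) : C :=
  match n with
  | O => p O
  | S m => peval p m z + p (S m) * Cpow z (S m)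
  end.

Definition H2norm2_poly (p : nat -> C) (n : nat) : R :=
  sum_n (fun k => (Cmod (p k) ^ 2)%R) n.

Definition inH2 (c : nat -> C) : Prop :=
  ex_series (fun k => (Cmod (c k) ^ 2)%R).

Definition H2norm2 (c : nat -> C) : R :=
  Series (fun k => (Cmod (c k) ^ 2)%R).

(* f = a + (z - zeta) g on the unit disk, with g = sum c_k z^k in H^2.
   Then f lies in D_zeta and D_zeta(f) = H2norm2 c (the pair (a,g) is unique
   for zeta in the closed disk). *)
Definition Drep (zeta : C) (f : C -> C) (a : C) (c : nat -> C) : Prop :=
  inH2 c /\
  forall z : C, (Cmod z < 1)%R ->
    exists gz : C,
      @is_series C_AbsRing C_NormedModule (fun k => c k * Cpow z k) gz /\
      f z = a + (z - zeta) * gz.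

(* Main.v *)
Require Import Defs.
From Stdlib Require Import Reals Lia Lra.
From Coquelicot Require Import Coquelicot.

Lemma fin_series {K : AbsRing} {V : NormedModule K} (f : nat -> V) (N : nat) :
  (forall k, (N < k)%nat -> f k = zero) -> is_series f (sum_n f N).
Proof.
  intros Hf. unfold is_series.
  apply filterlim_ext_loc with (fun _ => sum_n f N).
  - exists N. intros M HM.
    induction M as [|M IH].
    + assert (N = 0)%nat by lia. subst. reflexivity.
    + destruct (Nat.eq_dec N (S M)) as [->|Hne]; [reflexivity|].
      rewrite sum_Sn, <- IH by lia. rewrite Hf by lia. now rewrite plus_zero_r.
  - apply filterlim_const.
Qed.

Lemma peval_sum (p : nat -> C) n z :
  peval p n z = sum_n (fun k => (p k * Cpow z k)%C) n.
Proof.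
  induction n as [|n IH].
  - rewrite sum_O. simpl. ring.
  - rewrite sum_Sn. simpl. rewrite IH. reflexivity.
Qed.

Lemma re_series (a : nat -> C) (l : C) :
  is_series (V:=C_NormedModule) a l -> is_series (fun k => Re (a k)) (Re l).
Proof.
  intros H. unfold is_series in *.
  apply filterlim_ext with (fun N => Re (sum_n a N)).
  { intros N. induction N as [|N IH]. now rewrite !sum_O. rewrite !sum_Sn, <- IH. reflexivity. }
  eapply filterlim_comp. exact H.
  intros P [eps HP]. exists eps. intros y [H1 H2]. apply HP. exact H1.
Qed.

Lemma im_series (a : nat -> C) (l : C) :
  is_series (V:=C_NormedModule) a l -> is_series (fun k => Im (a k)) (Im l).
Proof.
  intros H. unfold is_series in *.
  apply filterlim_ext with (fun N => Im (sum_n a N)).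
  { intros N. induction N as [|N IH]. now rewrite !sum_O. rewrite !sum_Sn, <- IH. reflexivity. }
  eapply filterlim_comp. exact H.
  intros P [eps HP]. exists eps. intros y [H1 H2]. apply HP. exact H2.
Qed.

Lemma uniq_real (u : nat -> R) :
  (forall x : R, Rabs x < 1 -> is_series (fun k => u k * x ^ k) 0) -> forall k, u k = 0.
Proof.
  intros H k.
  assert (Hr : Rbar_lt 0 (CV_radius u)).
  { destruct (Rbar_lt_dec (CV_radius u) (Rabs (/2))) as [Hl|Hl].
    - exfalso. apply (CV_disk_outside u (/2) Hl).
      apply ex_series_lim_0. eexists. apply H. rewrite Rabs_pos_eq; lra.
    - rewrite Rabs_pos_eq in Hl by lra.
      destruct (CV_radius u) as [r| |]; simpl in *; auto; lra. }
  change 0 with ((fun _ : nat => 0) k).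
  apply PSeries_ext_recip.
  - exact Hr.
  - rewrite CV_radius_const_0. simpl. exact I.
  - exists (mkposreal 1 Rlt_0_1). intros y Hy.
    rewrite PSeries_const_0. unfold PSeries. apply is_series_unique. apply H.
    change (Rabs (y - 0) < 1) in Hy. rewrite Rminus_0_r in Hy. exact Hy.
Qed.

Lemma Cpow_R (x : R) k : Cpow (RtoC x) k = RtoC (x ^ k).
Proof. induction k as [|k IH]; simpl. reflexivity. rewrite IH. now rewrite RtoC_mult. Qed.

Lemma uniq_cplx (d : nat -> C) :
  (forall z : C, Cmod z < 1 -> is_series (V:=C_NormedModule) (fun k => (d k * Cpow z k)%C) (RtoC 0)) ->
  forall k, d k = RtoC 0.
Proof.
  intros H k.
  assert (HR : forall k, Re (d k) = 0).
  { apply uniq_real. intros x Hx.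
    assert (Hs := re_series _ _ (H (RtoC x) ltac:(rewrite Cmod_R; exact Hx))).
    eapply is_series_ext; [|exact Hs]. intros n. simpl. rewrite Cpow_R. unfold Re, Im. simpl. ring. }
  assert (HI : forall k, Im (d k) = 0).
  { apply uniq_real. intros x Hx.
    assert (Hs := im_series _ _ (H (RtoC x) ltac:(rewrite Cmod_R; exact Hx))).
    eapply is_series_ext; [|exact Hs]. intros n. simpl. rewrite Cpow_R. unfold Re, Im. simpl. ring. }
  specialize (HR k). specialize (HI k). destruct (d k) as [r i]. simpl in *. subst. reflexivity.
Qed.

Lemma tele (p c : nat -> C) zeta z :
  (forall k, c k = (zeta * c (S k) + p (S k))%C) -> forall m,
  ((z - zeta) * sum_n (fun k => c k * Cpow z k) m = c m * Cpow z (S m) + peval p m z - p 0%nat - zeta * c 0%nat)%C.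
Proof.
  intros H m. induction m as [|m IH].
  - rewrite sum_O. simpl. ring.
  - rewrite sum_Sn. change (plus ?a ?b) with (a + b)%C.
    rewrite Cmult_plus_distr_l, IH, (H m). simpl. ring.
Qed.

Fixpoint ee (p : nat -> C) (zeta : C) (n i : nat) : C :=
  match i with O => RtoC 0 | S i' => (zeta * ee p zeta n i' + p (n - i')%nat)%C end.

Definition cc p zeta n k := ee p zeta n (n - k).

Lemma cc_rel p zeta n : (forall k, (n < k)%nat -> p k = RtoC 0) ->
  forall k, cc p zeta n k = (zeta * cc p zeta n (S k) + p (S k))%C.
Proof.
  intros hdeg k. unfold cc.
  destruct (Nat.lt_ge_cases k n) as [Hk|Hk].
  - replace (n - k)%nat with (S (n - S k)) by lia. simpl.
    replace (n - (n - S k))%nat with (S k) by lia. reflexivity.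
  - replace (n - k)%nat with 0%nat by lia. replace (n - S k)%nat with 0%nat by lia.
    simpl. rewrite hdeg by lia. ring.
Qed.

Lemma cc_zero p zeta n k : (n <= k)%nat -> cc p zeta n k = RtoC 0.
Proof. intros. unfold cc. replace (n - k)%nat with 0%nat by lia. reflexivity. Qed.

Lemma existence (n : nat) (p : nat -> C) (zeta : C)
  (hdeg : forall k : nat, (n < k)%nat -> p k = RtoC 0) :
  exists (a : C) (c : nat -> C), Drep zeta (peval p n) a c.
Proof.
  exists (p 0%nat + zeta * cc p zeta n 0)%C, (cc p zeta n). split.
  - unfold inH2. eexists. apply (fin_series _ n). intros k Hk. rewrite cc_zero by lia.
    rewrite Cmod_0. simpl. rewrite Rmult_0_l. reflexivity.
  - intros z Hz. exists (sum_n (fun k => cc p zeta n k * Cpow z k)%C n). split.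
    + apply (@fin_series C_AbsRing C_NormedModule). intros k Hk. rewrite cc_zero by lia. rewrite Cmult_0_l. reflexivity.
    + rewrite (tele p _ zeta z (cc_rel p zeta n hdeg) n), (cc_zero p zeta n n) by lia. ring.
Qed.

Definition dd (p c : nat -> C) zeta a k : C :=
  match k with O => (a - p 0%nat - zeta * c 0%nat)%C
  | S j => (c j - zeta * c (S j) - p (S j))%C end.

Lemma rel_from_drep n p zeta a c
  (hdeg : forall k : nat, (n < k)%nat -> p k = RtoC 0) :
  Drep zeta (peval p n) a c -> forall k, c k = (zeta * c (S k) + p (S k))%C.
Proof.
  intros [_ H].
  assert (Hd : forall k, dd p c zeta a k = RtoC 0).
  { apply uniq_cplx. intros z Hz. destruct (H z Hz) as [gz [Hs Hf]].
    assert (HB : is_series (V:=C_NormedModule)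
       (fun k => match k with O => RtoC 0 | S j => (c j * Cpow z (S j))%C end) (z * gz)%C).
    { apply is_series_decr_1.
      change (is_series (V:=C_NormedModule) (fun k => (c k * Cpow z (S k))%C) (z * gz + - RtoC 0)%C).
      replace (z * gz + - RtoC 0)%C with (@scal C_Ring C_ModuleSpace z gz) . 2:{ change (z * gz = z * gz + - RtoC 0)%C; ring. }
      eapply is_series_ext; [|apply (is_series_scal z _ _ Hs)].
      intros k. change (z * (c k * Cpow z k) = c k * (z * Cpow z k))%C. ring. }
    assert (HC := is_series_scal (V:=C_NormedModule) (- zeta)%C _ _ Hs).
    assert (HD : is_series (V:=C_NormedModule) (fun k => (p k * Cpow z k)%C) (peval p n z)).
    { rewrite peval_sum. apply (@fin_series C_AbsRing C_NormedModule). intros k Hk.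
      rewrite hdeg by lia. rewrite Cmult_0_l. reflexivity. }
    assert (HE : is_series (V:=C_NormedModule) (fun k => match k with O => a | S _ => RtoC 0 end) a).
    { assert (HE0 := @fin_series C_AbsRing C_NormedModule (fun k => match k with O => a | S _ => RtoC 0 end) 0
         ltac:(intros [|k] Hk; [lia|reflexivity])).
      rewrite sum_O in HE0. exact HE0. }
    assert (Htot := is_series_plus _ _ _ _ (is_series_plus _ _ _ _ HB HC)
                         (is_series_plus _ _ _ _ (is_series_opp _ _ HD) HE)).
    replace (RtoC 0) with (plus (plus (z * gz)%C (scal (- zeta)%C gz)) (plus (opp (peval p n z)) a)).
    2:{ change ((z*gz + (-zeta)*gz) + (- peval p n z + a) = RtoC 0)%C. rewrite Hf. ring. }
    eapply is_series_ext; [|exact Htot].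
    intros [|k]; cbn -[Cpow]; ring. }
  intros k. specialize (Hd (S k)). simpl in Hd.
  apply (f_equal (fun t => t + (zeta * c (S k) + p (S k)))%C) in Hd.
  rewrite <- (Cplus_0_l (zeta * c (S k) + p (S k))%C), <- Hd. ring.
Qed.

Lemma tail_zero n (p c : nat -> C) zeta
  (hdeg : forall k : nat, (n < k)%nat -> p k = RtoC 0) (hzeta : Cmod zeta <= 1)
  (hrel : forall k, c k = (zeta * c (S k) + p (S k))%C) (h2 : inH2 c) :
  forall k, (n <= k)%nat -> c k = RtoC 0.
Proof.
  intros k Hk.
  assert (Hmono : forall m, Cmod (c k) <= Cmod (c (m + k)%nat)).
  { induction m as [|m IH]. simpl; lra.
    eapply Rle_trans; [exact IH|].
    rewrite (hrel (m + k)%nat), hdeg by lia. rewrite Cplus_0_r, Cmod_mult.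
    simpl. assert (0 <= Cmod (c (S (m + k)))) by apply Cmod_ge_0. nra. }
  destruct (Req_dec (Cmod (c k)) 0) as [H0|H0]. now apply Cmod_eq_0.
  exfalso. assert (Hpos : 0 < Cmod (c k)) by (pose proof (Cmod_ge_0 (c k)); lra).
  assert (Hl := ex_series_lim_0 _ h2). apply is_lim_seq_spec in Hl.
  destruct (Hl (mkposreal _ (pow_lt _ 2 Hpos))) as [N HN].
  specialize (HN (N + k)%nat ltac:(lia)). specialize (Hmono N). simpl in HN.
  rewrite Rminus_0_r in HN.
  pose proof (Rle_abs (Cmod (c (N+k)%nat) * (Cmod (c (N+k)%nat)*1))). nra.
Qed.

Fixpoint SS (x : nat -> R) (m j : nat) : R :=
  match m with O => 0 | S m' => SS x m' j + (if Nat.ltb j (S m') then x (S m') else 0) end.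

Lemma SS_nonneg x m j : (forall k, 0 <= x k) -> 0 <= SS x m j.
Proof. intros Hx. induction m; simpl. lra. destruct (Nat.ltb j (S m)); specialize (Hx (S m)); lra. Qed.

Lemma SS_step x m j : SS x m j = SS x m (S j) + (if Nat.ltb j m then x (S j) else 0).
Proof.
  induction m as [|m IH]; simpl. lra.
  rewrite IH.
  destruct (Nat.ltb_spec j m), (Nat.ltb_spec j (S m)), (Nat.ltb_spec (S j) (S m)); try lia; try lra.
  assert (j = m) by lia. subst. lra.
Qed.

Lemma SS_anti x m j : (forall k, 0 <= x k) -> SS x m j <= SS x m 0.
Proof.
  intros Hx. induction m; simpl. lra.
  destruct (Nat.ltb j (S m)); specialize (Hx (S m)); lra.
Qed.

Fixpoint QQ (x : nat -> R) (m : nat) : R :=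
  match m with O => 0 | S m' => QQ x m' + x (S m') ^ 2 end.

Lemma cs_aux x m y : 2 * SS x m 0 * y <= QQ x m + INR m * y ^ 2.
Proof.
  induction m as [|m IH]; simpl SS; simpl QQ. simpl. lra.
  rewrite S_INR. simpl. simpl in IH. pose proof (pow2_ge_0 (x (S m) - y)). nra.
Qed.

Lemma cs x m : (SS x m 0) ^ 2 <= INR m * QQ x m.
Proof.
  induction m as [|m IH]; simpl SS; simpl QQ. simpl; lra.
  rewrite S_INR. pose proof (cs_aux x m (x (S m))). simpl in *. nra.
Qed.

Lemma QQ_le (x : nat -> R) m : QQ x m <= sum_n (fun k => x k ^ 2) m.
Proof.
  induction m as [|m IH]; simpl QQ. rewrite sum_O. simpl. nra.
  rewrite sum_Sn. change (plus ?a ?b) with (a + b). lra.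
Qed.

Lemma sum_bound (f : nat -> R) M : (forall k, f k <= M) -> forall m, sum_n f m <= INR (S m) * M.
Proof.
  intros Hf m. induction m as [|m IH]. rewrite sum_O. simpl. specialize (Hf 0%nat). lra.
  rewrite sum_Sn. change (plus ?a ?b) with (a + b). rewrite (S_INR (S m)). specialize (Hf (S m)). lra.
Qed.

Theorem lemma3p1 (n : nat) (p : nat -> C) (zeta : C)
  (hdeg : forall k : nat, (n < k)%nat -> p k = RtoC 0)
  (hlead : p n <> RtoC 0)
  (hzeta : (Cmod zeta <= 1)%R) :
  (exists (a : C) (c : nat -> C), Drep zeta (peval p n) a c) /\
  (forall (a : C) (c : nat -> C), Drep zeta (peval p n) a c ->
     (H2norm2 c <= (INR n) ^ 2 * H2norm2_poly p n)%R).
Proof.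
  split. apply existence; exact hdeg.
  intros a c H.
  assert (hrel := rel_from_drep n p zeta a c hdeg H).
  assert (htz := tail_zero n p c zeta hdeg hzeta hrel (proj1 H)).
  set (x := fun k => Cmod (p k)).
  assert (Hx : forall k, 0 <= x k) by (intros; apply Cmod_ge_0).
  assert (Hb : forall i j, (n - j)%nat = i -> Cmod (c j) <= SS x n j).
  { induction i as [|i IH]; intros j Hj.
    - rewrite htz by lia. rewrite Cmod_0. apply SS_nonneg; exact Hx.
    - rewrite (hrel j). rewrite (SS_step x n j).
      destruct (Nat.ltb_spec j n); [|lia].
      specialize (IH (S j) ltac:(lia)).
      eapply Rle_trans. apply Cmod_triangle. rewrite Cmod_mult.
      assert (0 <= Cmod (c (S j))) by apply Cmod_ge_0. unfold x in *. nra. }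
  set (M := INR n * H2norm2_poly p n).
  assert (HM : forall j, Cmod (c j) ^ 2 <= M).
  { intros j. specialize (Hb _ j eq_refl). pose proof (SS_anti x n j Hx).
    pose proof (cs x n). pose proof (QQ_le x n). pose proof (Cmod_ge_0 (c j)).
    pose proof (pos_INR n).
    assert (Cmod (c j) ^ 2 <= SS x n 0 ^ 2) by (apply pow_incr; lra).
    assert (INR n * QQ x n <= M).
    { unfold M, H2norm2_poly. apply Rmult_le_compat_l. exact (pos_INR n). exact (QQ_le x n). }
    lra. }
  assert (HS : H2norm2 c = sum_n (fun k => Cmod (c k) ^ 2) n).
  { unfold H2norm2. apply is_series_unique. apply (@fin_series R_AbsRing R_NormedModule).
    intros k Hk. rewrite htz by lia. rewrite Cmod_0. simpl. rewrite Rmult_0_l. reflexivity. }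
  rewrite HS. destruct n as [|n'].
  - rewrite sum_O, htz by lia. rewrite Cmod_0. simpl. lra.
  - rewrite sum_Sn. change (plus ?a ?b) with (a + b).
    rewrite (htz (S n')) by lia. rewrite Cmod_0.
    pose proof (sum_bound _ M HM n'). unfold M in *. replace (INR (S n') ^ 2 * H2norm2_poly p (S n')) with (INR (S n') * (INR (S n') * H2norm2_poly p (S n'))) by ring. replace (0 ^ 2) with 0 by ring. lra.
Qed.
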